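(* Let $\Sigma$ be a finite set of primes, $k$ a positive integer, and $a_1,\ldots,a_k,b_1,\ldots,b_k\in\mathbb{Z}$ with $a_i\neq0$, $\gcd(a_i,b_i)=1$, $a_ib_j-a_jb_i\neq0$ ($i<j$), such that $(2k)!\prod_i a_i\prod_{i<j}(a_ib_j-a_jb_i)$ is a $\Sigma$-unit. Let $M=\max\{|a_1|,\ldots,|a_k|,|b_1|,\ldots,|b_k|\}$. Then for real $x\ge z\ge2$, the set $\Omega(x,z)$ has at most $$kM\frac{x+1}{z-1}+k\sqrt{Mx+M}$$ elements $n$ such that $L_i(n)$ is not $\Sigma$-square-free for some $i\in\{1,\ldots,k\}$.
   Context: An integer is a $\Sigma$-unit if all its prime divisors lie in $\Sigma$; it is $\Sigma$-square-free if it is a product of a $\Sigma$-unit and a square-free integer. $P_\Sigma(z)=\prod_{p<z,\,p\notin\Sigma}p$. $L_i(n)=a_in+b_i$. $\Omega(x,z)=\{n\in\mathbb{Z}:1\le n\le x,\ \gcd(L_1(n)\cdots L_k(n),P_\Sigma(z))=1\}$. *)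

(* Defs.v *)
From HB Require Import structures.
From mathcomp Require Import all_boot all_order all_algebra.
From mathcomp Require Import boolp reals.
Set Implicit Arguments. Unset Strict Implicit. Unset Printing Implicit Defensive.
Import Order.TTheory GRing.Theory Num.Theory.
Local Open Scope ring_scope.

(* Sigma is a finite set of primes, represented as a finite list of naturals
   all of which are prime (hypothesis in the theorem). *)

Definition Sigma_unit (Sigma : seq nat) (m : int) : Prop :=
  forall p : nat, prime p -> (p %| `|m|)%N -> p \in Sigma.

Definition squarefree_int (s : int) : Prop :=
  s != 0 /\ forall p : nat, prime p -> ~~ (p ^ 2 %| `|s|)%N.

Definition Sigma_squarefree (Sigma : seq nat) (m : int) : Prop :=
  exists u s : int, m = u * s /\ Sigma_unit Sigma u /\ squarefree_int s.

Definition P_Sigma {R : realType} (Sigma : seq nat) (z : R) : nat :=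
  \prod_(p <- iota 0 (Num.truncn z).+1 | prime p && (p \notin Sigma) && (p%:R < z)) p.

Definition L {k : nat} (a b : 'I_k -> int) (i : 'I_k) (n : int) : int :=
  a i * n + b i.

Definition in_Omega {R : realType} (Sigma : seq nat) (k : nat) (a b : 'I_k -> int)
    (x z : R) (n : int) : Prop :=
  1 <= n /\ n%:~R <= x /\
  gcdz (\prod_(i < k) L a b i n) (P_Sigma Sigma z)%:Z = 1.

(* Number of n in Omega(x,z) such that some L_i(n) is not Sigma-square-free.
   Every element of Omega(x,z) is a natural number in [1, floor x], so it
   suffices to count over 0 .. truncn x. *)
Definition bad_count {R : realType} (Sigma : seq nat) (k : nat) (a b : 'I_k -> int)
    (x z : R) : nat :=
  count (fun n : nat => `[< in_Omega Sigma a b x z n%:Z /\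
                            exists i : 'I_k, ~ Sigma_squarefree Sigma (L a b i n%:Z) >])
        (iota 0 (Num.truncn x).+1).

(* Main.v *)
Require Import Defs.
From HB Require Import structures.
From mathcomp Require Import all_boot all_order all_algebra.
From mathcomp Require Import boolp reals zify ring lra.
Import Order.TTheory GRing.Theory Num.Theory.
Local Open Scope ring_scope.

Lemma t1 (a b : int) (n : nat) (M : nat) : (`|a| <= M)%N -> (`|b| <= M)%N -> (`|(a * n%:Z + b)%R| <= M * n + M)%N.
Proof. move=> ha hb. rewrite -lez_nat abszE PoszD PoszM.
apply: le_trans (ler_normD _ _) _. rewrite normrM.
apply: lerD; last by rewrite -abszE lez_nat.
by apply: ler_wpM2r => //; rewrite -abszE lez_nat.
Qed.
Lemma diff_lem (n1 n2 q : nat) : (0 < q)%N -> (n1 %/ q = n2 %/ q)%N -> (q %| `|(n1%:Z - n2%:Z)%R|)%N -> n1 = n2.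
Proof. move=> q0 e.
have [h|h] := leqP n2 n1.
  rewrite subzn // absz_nat => /dvdn_leq. case: (ltngtP n1 n2); [lia| |done].
  move=> _ /(_ _); lia.
rewrite -opprB abszN subzn ?(ltnW h) // absz_nat => /dvdn_leq. move=> /(_ _); lia.
Qed.

Lemma count_inj (T U : eqType) (P : pred T) (s : seq T) (g : T -> U) (t : seq U) :
  uniq s -> {in filter P s &, injective g} ->
  (forall n, n \in s -> P n -> g n \in t) -> (count P s <= size t)%N.
Proof.
move=> us ig gt. rewrite -size_filter -(size_map g).
apply: uniq_leq_size; first by rewrite map_inj_in_uniq ?filter_uniq.
move=> y /mapP [n]; rewrite mem_filter => /andP [Pn ns] ->. exact: gt.
Qed.

Lemma count_res (a b : int) (q N : nat) : (0 < q)%N -> coprime q `|a| ->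
  (count (fun n : nat => q %| `|(a * n%:Z + b)%R|)%N (iota 0 N.+1) <= N %/ q + 1)%N.
Proof.
move=> q0 cq.
have -> : (N %/ q + 1 = size (iota 0 (N %/ q).+1))%N by rewrite size_iota addn1.
apply: (@count_inj nat nat _ _ (fun n => n %/ q)%N); first exact: iota_uniq.
  move=> n1 n2; rewrite !mem_filter => /andP [h1 _] /andP [h2 _] e.
  apply: (diff_lem _ _ _ q0 e).
  have : (q%:Z %| (a * n1%:Z + b) - (a * n2%:Z + b))%Z.
    by apply: rpredB; rewrite dvdzE absz_nat.
  rewrite dvdzE absz_nat.
  have -> : (a * n1%:Z + b) - (a * n2%:Z + b) = a * (n1%:Z - n2%:Z) by ring.
  by rewrite abszM mulnC Gauss_dvdl.
move=> n; rewrite mem_iota => /andP [_ hn] _.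
rewrite mem_iota /= ltnS. apply: leq_div2r. lia.
Qed.

Lemma count_zero (a b : int) (s : seq nat) : a != 0 -> uniq s ->
  (count (fun n : nat => (a * n%:Z + b == 0)%R) s <= 1)%N.
Proof.
move=> a0 us.
have -> : 1%N = size [:: tt] by [].
apply: (@count_inj nat unit _ _ (fun _ => tt)) => //.
move=> n1 n2; rewrite !mem_filter => /andP [/eqP h1 _] /andP [/eqP h2 _] _.
have : a * n1%:Z = a * n2%:Z by apply: (addIr b); rewrite h1 h2.
by move/(mulfI a0) => [].
Qed.

Lemma count_has (I T : Type) (P : I -> pred T) (js : seq I) (s : seq T) :
  (count (fun n => has (fun j => P j n) js) s <= \sum_(j <- js) count (P j) s)%N.
Proof.
elim: js => [|j js IH] /=; first by rewrite big_nil count_pred0.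
rewrite big_cons. apply: leq_trans (leq_add (leqnn _) IH).
rewrite -count_predUI. apply: leq_addr.
Qed.
Lemma ineq1 (R : realFieldType) (m : R) : 2 <= m -> 1/(m^+2) + 1/m <= 1/(m-1).
Proof. move=> h. have h1 : m != 0 by apply/eqP=> e; rewrite e in h; lra.
have h2 : m - 1 != 0 by apply/eqP=> e; lra.
rewrite -subr_ge0. have -> : 1 / (m - 1) - (1 / m ^+ 2 + 1 / m) = 1/(m^+2 * (m-1)) by field; rewrite h1 h2.
apply: divr_ge0; first lra. apply: mulr_ge0; nra.
Qed.

Lemma sumA (R : realFieldType) (P : pred nat) (len m : nat) : (2 <= m)%N ->
  \sum_(p <- iota m len | P p) 1 / (p%:R ^+ 2) <= 1 / (m%:R - 1) :> R.
Proof.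
elim: len m => [|len IH] m hm.
  rewrite big_nil. apply: divr_ge0 => //. rewrite subr_ge0 ler1n. lia.
have hmR : (2 : R) <= m%:R by rewrite (ler_nat R 2 m).
rewrite /= big_cons.
have IH1 := IH m.+1 (leqW hm).
have e : (m.+1%:R - 1 : R) = m%:R by rewrite -addn1 natrD addrK.
rewrite e in IH1.
case: (P m).
  apply: le_trans (ineq1 _ _ hmR). by apply: lerD.
apply: le_trans IH1 _.
rewrite !div1r lef_pV2 ?posrE; lra.
Qed.

Lemma sumC (R : realFieldType) (P : pred nat) (z : R) : 1 < z ->
  (forall p, P p -> z <= p%:R) -> forall len m, (2 <= m)%N ->
  \sum_(p <- iota m len | P p) 1 / (p%:R ^+ 2) <= 1 / (z - 1).
Proof.
move=> z1 hP; elim=> [|len IH] m hm.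
  rewrite big_nil. apply: divr_ge0 => //. lra.
case Pm: (P m).
  apply: le_trans (sumA _ _ _ _ hm) _.
  have hz := hP _ Pm.
  have hmR : (2 : R) <= m%:R by rewrite (ler_nat R 2 m).
  rewrite !div1r lef_pV2 ?posrE; lra.
have -> : iota m len.+1 = m :: iota m.+1 len by []. rewrite big_cons Pm. apply: IH. lia.
Qed.
Lemma sqfree_of (Sigma : seq nat) (m : int) : m != 0 ->
  (forall p, prime p -> p \notin Sigma -> ~~ (p ^ 2 %| `|m|)%N) ->
  Sigma_squarefree Sigma m.
Proof.
move=> m0 hp.
pose pi : nat_pred := [pred p | p \in Sigma].
set n := `|m|%N.
have n0 : (0 < n)%N by rewrite absz_gt0.
exists ((-1) ^+ (m < 0)%R * (n`_pi)%:Z)%R, (n`_pi^')%:Z.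
split; [|split].
- by rewrite -mulrA -PoszM partnC // {1}[m]intEsign.
- move=> p pp; rewrite abszMsign absz_nat => pd.
  have : p \in pi.
    apply: (pnatPpi (part_pnat pi n)).
    by rewrite mem_primes pp part_gt0.
  by rewrite inE.
- split; first by rewrite -lt0n part_gt0.
  move=> p pp; rewrite absz_nat.
  case ps: (p \in Sigma).
    apply/negP => h.
    have hd : (p %| n`_pi^')%N by apply: dvdn_trans h; rewrite dvdn_exp.
    have : p \in pi^'.
      apply: (pnatPpi (part_pnat pi^' n)).
      by rewrite mem_primes pp part_gt0.
    by rewrite !inE /= ps.
  apply/negP => h.
  have := hp p pp (negbT ps). by rewrite (dvdn_trans h (dvdn_part _ _)).
Qed.
Lemma iota_aux p S : (1 < p)%N -> (p <= S)%N -> (p < 2 + S.-1)%N.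
Proof. lia. Qed.

Lemma fin_arith (R : realFieldType) (A B1 M x w sy : R) : A <= x * w -> B1 <= sy ->
  1 <= M -> 0 < w -> 0 <= x -> A + B1 <= M * ((x + 1) * w) + sy.
Proof. move=> h1 h2 h3 h4 h5.
have e1 : 0 <= (M - 1) * (x * w) by apply: mulr_ge0; [lra | apply: mulr_ge0; lra].
have e2 : 0 <= M * w by apply: mulr_ge0; lra.
have e : M * ((x + 1) * w) = (M - 1) * (x * w) + x * w + M * w by ring.
rewrite e. lra. Qed.

Theorem proposition3p5 (R : realType) (Sigma : seq nat) (k : nat)
    (a b : 'I_k -> int) (x z : R) :
  all prime Sigma ->
  (0 < k)%N ->
  (forall i, a i != 0) ->
  (forall i, gcdz (a i) (b i) = 1) ->
  (forall i j : 'I_k, (i < j)%N -> a i * b j - a j * b i != 0) ->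
  Sigma_unit Sigma
    ((2 * k)`!%:Z * (\prod_(i < k) a i) *
     \prod_(i < k) \prod_(j < k | (i < j)%N) (a i * b j - a j * b i)) ->
  2 <= z -> z <= x ->
  let M : nat := \max_(i < k) maxn `|a i|%N `|b i|%N in
  (bad_count Sigma a b x z)%:R <=
    k%:R * M%:R * ((x + 1) / (z - 1)) + k%:R * Num.sqrt (M%:R * x + M%:R).
Proof.
move=> _ k0 a0 _ _ hU z2 zx /=.
set M := \max_(i < k) maxn `|a i|%N `|b i|%N.
have x0 : 0 <= x by lra.
set Nx := Num.truncn x.
have hNx : Nx%:R <= x by rewrite truncn_le.
have hMa : forall i, (`|a i| <= M)%N.
  move=> i; apply: leq_trans (leq_maxl _ `|b i|%N) _.
  exact: (@leq_bigmax _ (fun i => maxn `|a i|%N `|b i|%N) i).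
have hMb : forall i, (`|b i| <= M)%N.
  move=> i; apply: leq_trans (leq_maxr `|a i|%N _) _.
  exact: (@leq_bigmax _ (fun i => maxn `|a i|%N `|b i|%N) i).
have M1 : (1 <= M)%N.
  apply: leq_trans (hMa (Ordinal k0)). by rewrite absz_gt0.
have M1R : (1 : R) <= M%:R by rewrite ler1n.
set y : R := M%:R * x + M%:R.
have y0 : 0 <= y by rewrite /y; nra.
set S := Num.truncn (Num.sqrt y).
have S1 : (1 <= S)%N.
  rewrite truncn_ge_nat ?sqrtr_ge0 // -(sqrtr1 R) ler_sqrt //. rewrite /y; nra.
have hSR : S%:R <= Num.sqrt y by rewrite truncn_le sqrtr_ge0.
have hcop : forall i p, prime p -> p \notin Sigma -> coprime (p ^ 2) `|a i|.
  move=> i p pp pS; apply: coprimeXl; rewrite prime_coprime //.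
  apply/negP => pa; move/negP: pS; apply; apply: hU => //.
  rewrite !abszM (bigD1 i) //= abszM.
  apply: dvdn_mulr; apply: dvdn_mull; exact: dvdn_mulr.
pose f := fun p : nat => [&& prime p, p \notin Sigma & z <= p%:R].
set ps := iota 2 S.-1.
set fps := filter f ps.
set s := iota 0 Nx.+1.
pose Z := fun (i : 'I_k) (n : nat) => (a i * n%:Z + b i == 0).
pose Q := fun (i : 'I_k) (p n : nat) => (p ^ 2 %| `|(a i * n%:Z + b i)%R|)%N.
have key : forall n : nat, in_Omega Sigma a b x z n%:Z ->
    (exists i, ~ Sigma_squarefree Sigma (L a b i n%:Z)) ->
    has (fun i => Z i n || has (fun p => Q i p n) fps) (index_enum 'I_k).
  move=> n [_ [nx hg]] [i hi].
  have nxR : (n%:R : R) <= x := nx.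
  apply/hasP; exists i; first exact: mem_index_enum.
  rewrite /Z /Q /=. apply/orP. case: (boolP (a i * n%:Z + b i == 0)) => [h|Lne]; [by left | right].
  rewrite /L in hi.
  have [p [pp [pS pd]]] : exists p, prime p /\ p \notin Sigma /\ (p ^ 2 %| `|(a i * n%:Z + b i)%R|)%N.
    apply: contrapT => H; apply: hi; apply: sqfree_of => // p pp pS.
    apply/negP => pd; apply: H; exists p; by split.
  have pd1 : (p %| `|(a i * n%:Z + b i)%R|)%N.
    apply: dvdn_trans pd. by rewrite expnS dvdn_mulr.
  apply/hasP; exists p => //. rewrite mem_filter. apply/andP; split.
  - rewrite /f pp pS /=. rewrite leNgt; apply/negP => pz.
    have pP : (p %| P_Sigma Sigma z)%N.
      rewrite /P_Sigma (big_rem p); last first.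
        rewrite mem_iota add0n ltnS truncn_ge_nat; [exact: ltW | lra].
      rewrite pp pS pz /=. exact: dvdn_mulr.
    have pL : (p %| `|(\prod_(j < k) L a b j n%:Z)%R|)%N.
      rewrite (bigD1 i) //= abszM /L. exact: dvdn_mulr.
    have : (p%:Z %| gcdz (\prod_(j < k) L a b j n%:Z) (P_Sigma Sigma z)%:Z)%Z.
      by rewrite dvdz_gcd !dvdzE !absz_nat pL pP.
    rewrite hg dvdzE /= dvdn1 => /eqP p1. by rewrite p1 in pp.
  - rewrite mem_iota.
    have Lpos : (0 < `|(a i * n%:Z + b i)%R|)%N by rewrite absz_gt0.
    have h1 : (p ^ 2 <= M * n + M)%N := leq_trans (dvdn_leq Lpos pd) (t1 _ _ _ _ (hMa i) (hMb i)).
    have h2 : p%:R ^+ 2 <= y.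
      rewrite -natrX. apply: (@le_trans _ _ (M * n + M)%N%:R); first by rewrite ler_nat.
      rewrite natrD natrM /y lerD2r. by apply: ler_wpM2l.
    have h3 : p%:R <= Num.sqrt y.
      by rewrite -(ger0_norm (ler0n R p)) -sqrtr_sqr ler_sqrt.
    have hpS : (p <= S)%N by rewrite truncn_ge_nat ?sqrtr_ge0.
    by rewrite (prime_gt1 pp) /= iota_aux // prime_gt1.
have count1 : (bad_count Sigma a b x z <= \sum_(i < k) (1 + \sum_(p <- fps) (Nx %/ p ^ 2 + 1)))%N.
  rewrite /bad_count -/Nx -/s.
  apply: (@leq_trans (count (fun n : nat => has (fun i => Z i n || has (fun p => Q i p n) fps) (index_enum 'I_k)) s)).
    apply: sub_count => n /asboolP [hO [i hi]]. apply: key => //. by exists i.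
  apply: leq_trans (count_has _ _ _ _ _) _.
  apply: leq_sum => i _.
  apply: (@leq_trans (count (Z i) s + count (fun n => has (fun p => Q i p n) fps) s)).
    by rewrite -count_predUI leq_addr.
  apply: leq_add; first exact: count_zero _ _ _ (a0 i) (iota_uniq _ _).
  apply: leq_trans (count_has _ _ _ _ _) _.
  rewrite big_seq [X in (_ <= X)%N]big_seq; apply: leq_sum => p.
  rewrite mem_filter => /andP [/and3P [pp pS _] _].
  apply: count_res; [by rewrite expn_gt0 prime_gt0 | exact: hcop].
rewrite sum_nat_const card_ord in count1.
have hsize : (1 + size fps <= S)%N.
  have : (size fps <= S.-1)%N by rewrite size_filter (leq_trans (count_size _ _)) // size_iota.
  by rewrite -{2}(prednK S1) add1n ltnS.
have hsum : ((\sum_(p <- fps) (Nx %/ p ^ 2))%N%:R : R) <= x * (z - 1)^-1.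
  rewrite natr_sum big_seq.
  apply: (@le_trans _ _ (\sum_(p <- fps | p \in fps) x * (1 / p%:R ^+ 2))).
    apply: ler_sum => p; rewrite mem_filter => /andP [/and3P [pp _ _] _].
    have q0 : (0 : R) < p%:R ^+ 2 by rewrite exprn_gt0 // ltr0n prime_gt0.
    rewrite div1r ler_pdivlMr // -natrX -natrM. apply: le_trans hNx. by rewrite ler_nat leq_divM.
  rewrite -big_seq -mulr_sumr big_filter -div1r. apply: (ler_wpM2l x0).
  apply: sumC; [lra | by move=> p /and3P [_ _ ->] | by []].
apply: (@le_trans _ _ (k * (1 + (\sum_(p <- fps) (Nx %/ p ^ 2 + 1))))%N%:R); first by rewrite ler_nat.
rewrite big_split /= sum1_size natrM -mulrA -mulrDr. apply: ler_wpM2l; first exact: ler0n.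
have hB : ((1 + size fps)%N%:R : R) <= Num.sqrt y.
  apply: le_trans hSR. by rewrite ler_nat.
rewrite addnCA natrD. apply: fin_arith => //. by rewrite invr_gt0; lra.
Qed.
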